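(* Let $\lambda$ be a Young diagram with $\ell$ corners (removable boxes) $c_1,\dots,c_\ell$ and with addable boxes $s_0,s_1,\dots,s_\ell$. Set $X_i = x\,t\,\mathrm{wt}(c_i)$ for $1\le i\le \ell$ and $U_k=\mathrm{wt}(s_k)$ for $0\le k\le\ell$. Then \[ \sum_{k=0}^{\ell} \frac{1}{U_k^{\,j}}\, \frac{1}{\displaystyle \prod_{\substack{i=0\\ i\neq k}}^{\ell} \Bigl(1 - \frac{U_i}{U_k}\Bigr)} = \begin{cases} 1,&j=0,\\ 0,&1\leq j\leq \ell,\\ \dfrac{(-1)^\ell}{X_1\cdots X_{\ell}}, &j=\ell+1. \end{cases} \]
   Context: Here $x$ and $t$ are two variables (indeterminates). For a box $b$ of (or addable to) a Young diagram, its weight is $\mathrm{wt}(b)=x^{l'(b)}t^{a'(b)}$, where $l'(b)$ is the coleg and $a'(b)$ the coarm of $b$; i.e., for a box in row $r$ and column $c$ (rows and columns numbered from $1$, English convention with the first row on top), $l'(b)=r-1$ and $a'(b)=c-1$. A Young diagram with $\ell$ corners has exactly $\ell+1$ addable boxes. *)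

(* Defs.v *)
From mathcomp Require Import all_boot all_order all_algebra.
From mathcomp Require Import fraction.
Set Implicit Arguments. Unset Strict Implicit. Unset Printing Implicit Defensive.
Import GRing.Theory.
Local Open Scope ring_scope.

(* The field Q(x,t) of rational functions in two indeterminates x and t,
   realized as the fraction field of Q[x][t] = {poly {poly rat}}. *)
Local Notation tofrac := (@FracField.tofrac _).
Definition QXT := {fraction {poly {poly rat}}}.
Definition xvar : QXT := tofrac (('X : {poly rat})%:P).
Definition tvar : QXT := tofrac ('X : {poly {poly rat}}).

Definition is_partition (la : seq nat) : bool :=
  sorted geq la && all (fun p => 0 < p)%N la.

(* Boxes are pairs (row, column), numbered from 1, English convention. *)
Definition corners (la : seq nat) : seq (nat * nat) :=
  [seq (i.+1, nth 0%N la i) | i <- iota 0 (size la) & (nth 0%N la i.+1 < nth 0%N la i)%N].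

Definition addable (la : seq nat) : seq (nat * nat) :=
  [seq (i.+1, (nth 0%N la i).+1) | i <- iota 0 (size la).+1
     & (i == 0%N) || (nth 0%N la i < nth 0%N la i.-1)%N].

Definition wt (b : nat * nat) : QXT := xvar ^+ (b.1 - 1) * tvar ^+ (b.2 - 1).

(* Main.v *)
Require Import Defs.
From mathcomp Require Import all_boot all_order all_algebra.
From mathcomp Require Import fraction ring.
Import GRing.Theory.
Local Open Scope ring_scope.
Set Implicit Arguments. Unset Strict Implicit. Unset Printing Implicit Defensive.
Section Lag.
Variable K : fieldType.
Variable n : nat.
Variable u : nat -> K.
Hypothesis uinj : forall i j : 'I_n, u i = u j -> i = j.

Definition Pk (k : 'I_n) : {poly K} := \prod_(i < n | i != k) ('X - (u i)%:P).
Definition Dk (k : 'I_n) : K := \prod_(i < n | i != k) (u k - u i).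

Lemma Dk_neq0 k : Dk k != 0.
Proof.
apply/prodf_neq0 => i ik; rewrite subr_eq0; apply/eqP => /uinj e.
by move: ik; rewrite e eqxx.
Qed.

Lemma Pk_eval k (m : 'I_n) : (Pk k).[u m] = if m == k then Dk k else 0.
Proof.
rewrite /Pk horner_prod; case: eqP => [->|/eqP mk].
  by apply: eq_bigr => i _; rewrite hornerXsubC.
rewrite (bigD1 m) //= hornerXsubC subrr mul0r //.
Qed.

Lemma size_Pk k : (0 < n)%N -> size (Pk k) = n.
Proof.
move=> n_gt0.
rewrite size_prod /=; last first.
  by move=> j neq_ji; rewrite polyXsubC_eq0.
rewrite (eq_bigr (fun=> (2 * 1)%N)); last first.
  by move=> j neq_ji; rewrite size_XsubC.
rewrite -big_distrr /= sum1_card cardC1 card_ord /=.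
by case: (n) n_gt0 => // ?; rewrite mul2n -addnn -addSn addnK.
Qed.

Lemma monic_Pk k : Pk k \is monic.
Proof. by apply: monic_prod => i _; apply: monicXsubC. Qed.

Lemma lagrange_id (p : {poly K}) : (size p <= n)%N ->
  p = \sum_(k < n) (p.[u k] / Dk k) *: Pk k.
Proof.
move=> sp; apply/eqP; rewrite -subr_eq0; apply/eqP.
set q := _ - _.
apply/eqP; apply/negPn/negP => qn0.
have : (size [seq u (nat_of_ord i) | i <- enum 'I_n] < size q)%N.
  apply: max_poly_roots => //.
    apply/allP => x /mapP [m _ ->]; rewrite /root /q hornerD hornerN horner_sum.
    rewrite (bigD1 m) //= big1 ?addr0.
      by rewrite hornerZ Pk_eval eqxx mulfVK ?Dk_neq0 // subrr.
    by move=> k km; rewrite hornerZ Pk_eval eq_sym (negPf km) mulr0.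
  rewrite map_inj_uniq ?enum_uniq //; exact: uinj.
rewrite size_map size_enum_ord; apply/negP; rewrite -leqNgt.
rewrite /q; apply: leq_trans (size_polyD _ _) _; rewrite geq_max sp size_polyN.
apply: leq_trans (size_sum _ _ _) _; apply/bigmax_leqP => k _.
apply: leq_trans (size_scale_leq _ _) _.
by rewrite size_Pk // (leq_ltn_trans (leq0n k) (ltn_ord k)).
Qed.

Lemma lag_coef m : (m < n)%N ->
  \sum_(k < n) u k ^+ m / Dk k = (m == n.-1)%:R.
Proof.
move=> mn; have n0 : (0 < n)%N by case: (n) mn.
have e := lagrange_id (p:='X^m); rewrite size_polyXn in e; move: {e}(e mn) => e.
rewrite (eq_bigr (fun k : 'I_n => ((('X^m).[u k] / Dk k) *: Pk k)`_n.-1)); last first.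
  move=> k _; rewrite coefZ hornerXn.
  have := monic_Pk k; rewrite qualifE /= lead_coefE size_Pk // => /eqP ->.
  by rewrite mulr1.
by rewrite -coef_sum -e coefXn eq_sym.
Qed.

Lemma lag_zero : (0 < n)%N ->
  \sum_(k < n) (\prod_(i < n | i != k) (- u i)) / Dk k = 1.
Proof.
move=> n0; have e := lagrange_id (p:=1); rewrite size_poly1 in e; move: {e}(e n0).
move=> /(congr1 (fun p : {poly K} => p.[0])); rewrite hornerC horner_sum => E; rewrite [RHS]E.
apply: eq_bigr => k _; rewrite hornerZ hornerC mul1r mulrC /Pk horner_prod.
by congr (_ * _); apply: eq_bigr => i _; rewrite hornerXsubC sub0r.
Qed.
End Lag.

Lemma key (K : fieldType) (l j : nat) (u X : nat -> K) :
 (forall i j : 'I_l.+1, u i = u j -> i = j) -> (forall k : 'I_l.+1, u k != 0) ->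
 (j <= l.+1)%N ->
 \prod_(k < l.+1) u k = \prod_(i < l) X i ->
 \sum_(k < l.+1) (u k ^+ j)^-1 / \prod_(i < l.+1 | i != k) (1 - u i / u k)
 = if j == 0%N then 1 else if (j <= l)%N then 0 else (-1) ^+ l / \prod_(i < l) X i.
Proof.
move=> uinj u0 jl eP.
have hp (k : 'I_l.+1) : \prod_(i < l.+1 | i != k) (1 - u i / u k) = Dk u k / u k ^+ l.
  rewrite /Dk (eq_bigr (fun i : 'I_l.+1 => (u k - u i) * (u k)^-1)); last first.
    by move=> i _; rewrite mulrBl divff.
  by rewrite big_split /= prodr_const cardC1 card_ord /= exprVn.
have ht (k : 'I_l.+1) : (u k ^+ j)^-1 / \prod_(i < l.+1 | i != k) (1 - u i / u k)
     = u k ^+ l / u k ^+ j / Dk u k.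
  by rewrite hp invf_div mulrA [_^-1 * _]mulrC.
rewrite (eq_bigr _ (fun k _ => ht k)).
case: ifP => [/eqP j0|jn0].
  rewrite j0 (eq_bigr (fun k : 'I_l.+1 => u k ^+ l / Dk u k)).
    by rewrite lag_coef // eqxx.
  by move=> k _; rewrite expr0 invr1 mulr1.
case: ifP => [jle|jgt].
  rewrite (eq_bigr (fun k : 'I_l.+1 => u k ^+ (l - j) / Dk u k)).
    rewrite lag_coef // ?ltnS ?leq_subr //=.
    by rewrite -{2}(subn0 l) eqn_sub2lE // ?jn0.
  by move=> k _; rewrite exprB // unitfE.
have -> : j = l.+1 by apply/eqP; rewrite eqn_leq jl leqNgt ltnS jgt.
rewrite (eq_bigr (fun k : 'I_l.+1 => (u k)^-1 / Dk u k)); last first.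
  by move=> k _; rewrite exprS invfM [u k ^+ l * _]mulrCA mulfV ?expf_neq0 // mulr1.
rewrite -eP.
have P0 : \prod_(k < l.+1) u k != 0 by apply/prodf_neq0 => k _.
have := lag_zero uinj (ltn0Sn l).
rewrite (eq_bigr (fun k : 'I_l.+1 => ((-1) ^+ l * \prod_(k < l.+1) u k) * ((u k)^-1 / Dk u k))).
  rewrite -big_distrr /= => /(canRL (mulKf _)) -> //.
    by rewrite mulr1 invfM invr_sign mulrC.
  by rewrite mulf_neq0 ?signr_eq0.
move=> k _.
rewrite (eq_bigr (fun i : 'I_l.+1 => -1 * u i)); last by move=> i _; rewrite mulN1r.
rewrite big_split /= prodr_const cardC1 card_ord /=.
rewrite [\prod_(k0 < l.+1) u k0](bigD1 k) //=.
have := Dk_neq0 uinj k; have := u0 k; move: (Dk u k) (u k) => d v v0 d0.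
by field; rewrite d0 v0.
Qed.

Definition Ic (la : seq nat) : seq nat :=
  [seq i <- iota 0 (size la) | (nth 0%N la i.+1 < nth 0%N la i)%N].

Lemma corners_eq la : corners la = map (fun i => (i.+1, nth 0%N la i)) (Ic la).
Proof. by []. Qed.

Lemma addable_eq la : addable la =
  (1%N, (nth 0%N la 0).+1) :: map (fun i => (i.+2, (nth 0%N la i.+1).+1)) (Ic la).
Proof.
rewrite /addable /Ic /= (iotaDl 1 0) filter_map -map_comp.
congr (_ :: _); apply: eq_map => i //.
Qed.

Lemma size_addable la : size (addable la) = (size (corners la)).+1.
Proof. by rewrite addable_eq corners_eq /= !size_map. Qed.

Lemma xvar_neq0 : xvar != 0.
Proof. rewrite /xvar tofrac_eq0 polyC_eq0 polyX_eq0; exact isT. Qed.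
Lemma tvar_neq0 : tvar != 0.
Proof. rewrite /tvar tofrac_eq0 polyX_eq0; exact isT. Qed.

Lemma wt_neq0 b : wt b != 0.
Proof. rewrite /wt; apply: mulf_neq0; apply: expf_neq0; [exact: xvar_neq0|exact: tvar_neq0]. Qed.

Lemma wt_row a b : wt a = wt b -> (a.1 - 1 = b.1 - 1)%N.
Proof.
rewrite /wt /xvar /tvar -!tofracXn -!tofracM => /eqP; rewrite tofrac_eq.
rewrite -!(rmorphXn (@polyC _)) !mul_polyC => /eqP /(congr1 lead_coef).
rewrite !lead_coefZ !lead_coefXn !mulr1 => /(congr1 (fun p : {poly rat} => size p)).
by rewrite !size_polyXn => -[].
Qed.

Lemma sum_tel la : sorted geq la ->
  (nth 0 la 0 + \sum_(i <- Ic la) nth 0 la i.+1 = \sum_(i <- Ic la) nth 0 la i)%N.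
Proof.
rewrite /Ic !big_filter.
elim: la => [|a la IH] srt; first by rewrite /= !big_nil.
have {}IH := IH (path_sorted srt).
rewrite /= (iotaDl 1 0) !big_cons !big_map /=.
have ha : (nth 0 la 0 <= a)%N.
  by case: la srt {IH} => //= b la /andP [].
case: ifP => lt.
  by rewrite -IH addnCA.
have e : nth 0 la 0 = a by apply/eqP; rewrite eqn_leq ha leqNgt lt.
by rewrite -IH e.
Qed.

Unset Implicit Arguments. Set Strict Implicit.

Theorem lemmaC0p1 (la : seq nat) (j : nat) :
  is_partition la ->
  let l := size (corners la) in
  let X := fun i : nat => xvar * tvar * wt (nth (0%N, 0%N) (corners la) i) in
  let U := fun k : nat => wt (nth (0%N, 0%N) (addable la) k) in
  (j <= l.+1)%N ->
  \sum_(k < l.+1)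
     (U k ^+ j)^-1 / \prod_(i < l.+1 | i != k) (1 - U i / U k)
  = if j == 0%N then 1
    else if (j <= l)%N then 0
    else (-1) ^+ l / \prod_(i < l) X i.
Proof.
move=> hp l X U jl.
have sA : size (addable la) = l.+1 := size_addable la.
apply: key => //.
- move=> i k /wt_row e; apply/val_inj/eqP.
  have uR : uniq [seq (b.1 - 1)%N | b <- addable la].
    rewrite addable_eq /= -map_comp /= subnn; apply/andP; split.
      by apply/negP => /mapP [m _].
    rewrite (map_inj_uniq (f := fun x : nat => x.+1)) ?filter_uniq ?iota_uniq //.
    by move=> a b [].
  have si : (i < size (addable la))%N by rewrite sA ltn_ord.
  have sk : (k < size (addable la))%N by rewrite sA ltn_ord.
  have si' := si; have sk' := sk.
  rewrite -(size_map (fun b => (b.1 - 1)%N)) in si' sk'.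
  rewrite -(nth_uniq 0%N si' sk' uR).
  by rewrite !(nth_map (0%N, 0%N)) // e.
- by move=> k; apply: wt_neq0.
have eA : \prod_(b <- addable la) wt b = \prod_(k < l.+1) U k.
  by rewrite (big_nth (0%N,0%N)) sA big_mkord.
have eC : \prod_(c <- corners la) (xvar * tvar * wt c) = \prod_(i < l) X i.
  by rewrite (big_nth (0%N,0%N)) big_mkord.
rewrite -eA -eC addable_eq corners_eq big_cons !big_map /wt /=.
rewrite [RHS](eq_big_seq (fun i => xvar ^+ i.+1 * tvar ^+ nth 0%N la i)); last first.
  move=> i; rewrite mem_filter => /andP [lt _] /=.
  rewrite subn1 /= mulrACA -!exprS subn1 prednK //.
  exact: leq_ltn_trans (leq0n _) lt.
rewrite [in LHS](eq_bigr (fun i => xvar ^+ i.+1 * tvar ^+ nth 0%N la i.+1)); last first.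
  by move=> i _; rewrite !subn1.
rewrite !big_split /= !prodrXr -sum_tel; last by case/andP: hp.
by rewrite subnn subn1 /= expr0 mul1r exprD mulrCA.
Qed.
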